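(* Assume $\rho=\rho_1$. Let $Y=(-\infty,1]\sqcup\big([0,\rho]\times\{\infty\}\big)$ with the following topology: $(-\infty,1]$ is an open subset carrying its usual topology; for $x\in[0,\rho]$, a base of neighborhoods of $(x,\infty)$ is formed by the sets $$\{(y,\infty): y\in[0,\rho],\ |y-x|<\varepsilon\}\ \cup\ \bigcup_{n>N}\Big(\big((-1)^n x-2\lfloor n/2\rfloor\rho-\varepsilon,\ (-1)^n x-2\lfloor n/2\rfloor\rho+\varepsilon\big)\cap(-\infty,1]\Big),$$ for $\varepsilon>0$, $N\in\mathbb N$. Then $(\widetilde X,\widetilde f)$ is topologically conjugate to $(Y,g)$, where $g$ is the homeomorphism of $Y$ given by $g(x)=\frac{x-\rho}{1-\rho}$ for $x\in(\rho,1]$, $g(x)=x-\rho$ for $x\in(-\infty,\rho]$, and $g(x,\infty)=(\rho-x,\infty)$ for $x\in[0,\rho]$. The conjugating homeomorphism maps $\widetilde X_1$ onto $(-\infty,1]$ and $\widetilde X\setminus\widetilde X_1$ onto $[0,\rho]\times\{\infty\}$. In particular $\widetilde f$ is an increasing map on the ray $(-\infty,1]$ with fixed point $1$, and an involution on $[0,\rho]\times\{\infty\}$.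
   Context: Standing setup. Fix real numbers $\rho,\delta,\gamma,\alpha$ with $0<\rho<1$, $\delta>0$, $\gamma>-\delta/\rho$, $-\delta/\rho<\alpha<0$. Define $f:[0,1]\to[0,1]$ by $f(x)=f_0(x):=\frac{\alpha x-\alpha\rho}{\gamma x+\delta}$ for $x\in[0,\rho]$ and $f(x)=f_1(x):=\frac{x-\rho}{1-\rho}$ for $x\in(\rho,1]$. Put $\rho_1:=f_0(0)$. The inverse limit is $\widetilde X=\{(x_0,x_1,\dots)\in[0,1]^{\mathbb N}: f(x_{n+1})=x_n \ \forall n\}$ with the product topology; the shift is $\widetilde f(x_0,x_1,\dots)=(f(x_0),x_0,x_1,\dots)$. $\widetilde X_1:=\{(x_0,x_1,\dots)\in\widetilde X:\lim_n x_n=1\}$. $\lfloor\cdot\rfloor$ is the integer part. *)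

(* Defs.v *)
From Stdlib Require Import Reals.
Open Scope R_scope.

Definition f0 (rho gamma delta alpha x : R) : R :=
  (alpha * x - alpha * rho) / (gamma * x + delta).
Definition f1 (rho x : R) : R := (x - rho) / (1 - rho).
Definition fmap (rho gamma delta alpha x : R) : R :=
  if Rle_dec x rho then f0 rho gamma delta alpha x else f1 rho x.

Definition Xt (rho gamma delta alpha : R) (x : nat -> R) : Prop :=
  forall n, 0 <= x n <= 1 /\ fmap rho gamma delta alpha (x (S n)) = x n.

Definition ftilde (rho gamma delta alpha : R) (x : nat -> R) : nat -> R :=
  fun n => match n with
           | O => fmap rho gamma delta alpha (x O)
           | S m => x m
           end.

Definition Xt1 (x : nat -> R) : Prop := Un_cv x 1.

(* open sets of the subspace  P  of the product space  R^N
   (product topology: basic neighbourhoods constrain finitely many coords) *)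
Definition openX (P : (nat -> R) -> Prop) (U : (nat -> R) -> Prop) : Prop :=
  (forall x, U x -> P x) /\
  (forall x, U x -> exists eps, eps > 0 /\ exists N : nat,
      forall y, P y -> (forall n, (n <= N)%nat -> Rabs (y n - x n) < eps) -> U y).

(* The space Y = (-oo,1] |_| ([0,rho] x {oo}):
   inl x  stands for x in (-oo,1],  inr x  stands for (x, oo). *)
Definition Yset (rho : R) (p : R + R) : Prop :=
  match p with
  | inl x => x <= 1
  | inr x => 0 <= x <= rho
  end.

Definition isinl (p : R + R) : Prop :=
  match p with inl _ => True | inr _ => False end.

Definition Ybasic (rho x eps : R) (N : nat) (p : R + R) : Prop :=
  match p with
  | inr y => 0 <= y <= rho /\ Rabs (y - x) < eps
  | inl y => y <= 1 /\ exists n : nat, (n > N)%nat /\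
        Rabs (y - ((-1) ^ n * x - 2 * INR (Nat.div2 n) * rho)) < eps
  end.

Definition openY (rho : R) (U : R + R -> Prop) : Prop :=
  (forall p, U p -> Yset rho p) /\
  (forall p, U p ->
     match p with
     | inl x => exists eps, eps > 0 /\
                  forall y, y <= 1 -> Rabs (y - x) < eps -> U (inl y)
     | inr x => exists eps, eps > 0 /\ exists N : nat,
                  forall q, Ybasic rho x eps N q -> U q
     end).

Definition gmap (rho : R) (p : R + R) : R + R :=
  match p with
  | inl x => inl (if Rle_dec x rho then x - rho else (x - rho) / (1 - rho))
  | inr x => inr (rho - x)
  end.

Definition homeo {S T : Type} (A : S -> Prop) (oA : (S -> Prop) -> Prop)
  (B : T -> Prop) (oB : (T -> Prop) -> Prop) (h : S -> T) : Prop :=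
  (forall x, A x -> B (h x)) /\
  (forall x y, A x -> A y -> h x = h y -> x = y) /\
  (forall y, B y -> exists x, A x /\ h x = y) /\
  (forall V, oB V -> oA (fun x => A x /\ V (h x))) /\
  (forall U, oA U -> oB (fun y => exists x, U x /\ h x = y)).

(* Main.v *)
Require Import Defs.
From Stdlib Require Import Reals Lra Lia Psatz ZArith ClassicalEpsilon FunctionalExtensionality.
Open Scope R_scope.

Section Main.
Variables rho gamma delta alpha : R.
Hypothesis Hr : 0 < rho < 1.
Hypothesis Hd : 0 < delta.
Hypothesis Hg : gamma * rho + delta > 0.
Hypothesis Ha : alpha = - delta.

Definition ff := fmap rho gamma delta alpha.
Definition F0 := f0 rho gamma delta alpha.

Lemma den_pos x : 0 <= x <= rho -> gamma * x + delta >= Rmin delta (gamma*rho+delta).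
Proof.
  intros Hx. assert (rho * (gamma*x+delta) = (rho - x)*delta + x*(gamma*rho+delta)) by ring.
  assert (Hm1 : Rmin delta (gamma*rho+delta) <= delta) by apply Rmin_l.
  assert (Hm2 : Rmin delta (gamma*rho+delta) <= gamma*rho+delta) by apply Rmin_r.
  apply Rle_ge. apply (Rmult_le_reg_l rho); [lra|]. rewrite H.
  assert (rho * Rmin delta (gamma * rho + delta) = (rho - x)*Rmin delta (gamma * rho + delta) + x * Rmin delta (gamma * rho + delta)) by ring.
  rewrite H0. apply Rplus_le_compat; apply Rmult_le_compat_l; lra.
Qed.

Definition mD := Rmin delta (gamma*rho+delta).
Lemma mD_pos : mD > 0.
Proof. unfold mD, Rmin; destruct Rle_dec; lra. Qed.

Lemma F0_eq x : F0 x = delta * (rho - x) / (gamma * x + delta).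
Proof. unfold F0, f0. rewrite Ha. f_equal. ring. Qed.

Lemma F0_range x : 0 <= x <= rho -> 0 <= F0 x <= rho.
Proof.
  intros Hx. pose proof (den_pos x Hx). pose proof mD_pos. fold mD in H.
  rewrite F0_eq. split.
  - apply Rmult_le_pos; [nra|]. left; apply Rinv_0_lt_compat; lra.
  - apply (Rmult_le_reg_r (gamma*x+delta)); [lra|]. unfold Rdiv. rewrite Rmult_assoc, Rinv_l; [|lra]. nra.
Qed.

Lemma F0_invol x : 0 <= x <= rho -> F0 (F0 x) = x.
Proof.
  intros Hx. pose proof (den_pos x Hx). pose proof mD_pos. fold mD in H.
  rewrite !F0_eq. field. split; [lra|]. nra.
Qed.

Lemma F0_rho : F0 rho = 0.
Proof. rewrite F0_eq. unfold Rdiv. rewrite Rminus_diag, Rmult_0_r. ring. Qed.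

Lemma F0_diff a b : 0 <= a <= rho -> 0 <= b <= rho ->
  F0 a - F0 b = delta*(gamma*rho+delta)*(b-a)/((gamma*a+delta)*(gamma*b+delta)).
Proof.
  intros Ha' Hb'. pose proof (den_pos a Ha'). pose proof (den_pos b Hb'). pose proof mD_pos. fold mD in *.
  rewrite !F0_eq. field. lra.
Qed.

Definition ww := sqrt (delta / (gamma*rho+delta)).
Lemma ww_pos : 0 < ww.
Proof. unfold ww. apply sqrt_lt_R0. apply Rdiv_lt_0_compat; lra. Qed.
Lemma ww_sq : ww * ww * (gamma*rho+delta) = delta.
Proof. unfold ww. rewrite sqrt_sqrt. field. lra. left; apply Rdiv_lt_0_compat; lra. Qed.

Definition sig (s : R) := ww * rho * s / ((ww - 1) * s + rho).
Definition phi (t : R) := rho * t / (ww * rho - (ww - 1) * t).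

Definition mE := Rmin 1 ww * rho.
Lemma mE_pos : mE > 0.
Proof. unfold mE. pose proof ww_pos. unfold Rmin; destruct Rle_dec; nra. Qed.
Lemma E_low s : 0 <= s <= rho -> (ww - 1) * s + rho >= mE.
Proof.
  intros Hs. pose proof ww_pos. unfold mE.
  assert (H1 : Rmin 1 ww <= 1) by apply Rmin_l. assert (H2 : Rmin 1 ww <= ww) by apply Rmin_r.
  assert ((ww - 1) * s + rho = (rho - s) * 1 + s * ww) by ring. rewrite H0.
  assert (Rmin 1 ww * rho = (rho - s) * Rmin 1 ww + s * Rmin 1 ww) by ring. rewrite H3.
  apply Rle_ge, Rplus_le_compat; apply Rmult_le_compat_l; lra.
Qed.
Definition ME := Rmax 1 ww * rho.
Lemma E_up s : 0 <= s <= rho -> (ww - 1) * s + rho <= ME.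
Proof.
  intros Hs. pose proof ww_pos. unfold ME.
  assert (H1 : 1 <= Rmax 1 ww) by apply Rmax_l. assert (H2 : ww <= Rmax 1 ww) by apply Rmax_r.
  assert ((ww - 1) * s + rho = (rho - s) * 1 + s * ww) by ring. rewrite H0.
  assert (Rmax 1 ww * rho = (rho - s) * Rmax 1 ww + s * Rmax 1 ww) by ring. rewrite H3.
  apply Rplus_le_compat; apply Rmult_le_compat_l; lra.
Qed.

Lemma sig_range s : 0 <= s <= rho -> 0 <= sig s <= rho.
Proof.
  intros Hs. pose proof (E_low s Hs). pose proof mE_pos. pose proof ww_pos. unfold sig. split.
  - apply Rmult_le_pos; [apply Rmult_le_pos; [apply Rmult_le_pos|]; lra|]. left; apply Rinv_0_lt_compat; lra.
  - apply (Rmult_le_reg_r ((ww - 1) * s + rho)); [lra|]. unfold Rdiv. rewrite Rmult_assoc, Rinv_l; [|lra]. nra.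
Qed.

Lemma sig_0 : sig 0 = 0.
Proof. unfold sig. rewrite Rmult_0_r. unfold Rdiv; ring. Qed.
Lemma sig_rho : sig rho = rho.
Proof. unfold sig. pose proof ww_pos. field. nra. Qed.

Lemma cross a b c d : b <> 0 -> d <> 0 -> a * d = c * b -> a / b = c / d.
Proof. intros Hb Hd' H. field_simplify_eq; auto. lra. Qed.

Lemma sig_conj s : 0 <= s <= rho -> sig (rho - s) = F0 (sig s).
Proof.
  intros Hs. pose proof (E_low s Hs). pose proof (E_low (rho - s) ltac:(lra)). pose proof mE_pos.
  pose proof (sig_range s Hs). pose proof (den_pos _ H2). pose proof mD_pos. fold mD in *.
  rewrite F0_eq. pose proof ww_sq. pose proof ww_pos.
  assert (Hpos : 0 < gamma * sig s + delta) by lra.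
  unfold sig in *.
  set (E1 := (ww - 1) * s + rho) in *.
  replace (delta * (rho - ww * rho * s / E1) / (gamma * (ww * rho * s / E1) + delta))
   with (delta * rho * (rho - s) / (gamma * ww * rho * s + delta * E1)).
  2:{ apply cross. 
      - intro Hc. assert (gamma * ww * rho * s + delta * E1 = E1 * (gamma * (ww * rho * s / E1) + delta)) by (field; lra). nra.
      - lra.
      - assert (HE : E1 <> 0) by lra. unfold E1 in *. field. auto. }
  assert (HE : E1 <> 0) by lra. apply cross. lra.
  intro Hc. assert (gamma * ww * rho * s + delta * E1 = E1 * (gamma * (ww * rho * s / E1) + delta)) by (field; lra). nra.
  unfold E1.
  assert (forall A B, A - B = 0 -> A = B) as HH by (intros; lra). apply HH.
  replace (ww * rho * (rho - s) * (gamma * ww * rho * s + delta * ((ww - 1) * s + rho)) -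
   delta * rho * (rho - s) * ((ww - 1) * (rho - s) + rho)) with (rho*(rho-s)*s*(ww*ww*(gamma*rho+delta) - delta)) by ring.
  rewrite H5. ring.
Qed.

Lemma sig_diff a b : 0 <= a <= rho -> 0 <= b <= rho ->
  sig b - sig a = ww*rho*rho*(b-a)/(((ww-1)*a+rho)*((ww-1)*b+rho)).
Proof.
  intros Ha' Hb'. pose proof (E_low a Ha'). pose proof (E_low b Hb'). pose proof mE_pos.
  unfold sig. field. split; lra.
Qed.

Definition KS := Rmax 1 (Rmax (ww*rho*rho/(mE*mE)) (ME*ME/(ww*rho*rho))).
Lemma KS_ge1 : 1 <= KS.
Proof. unfold KS. apply Rmax_l. Qed.

Lemma quot_le k d P m : 0 < k -> 0 <= d -> 0 < m -> m <= P -> k * d / P <= k / m * d.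
Proof.
  intros. replace (k / m * d) with ((k*d) * / m) by (field; lra). unfold Rdiv.
  apply Rmult_le_compat_l; [nra|]. apply Rinv_le_contravar; lra.
Qed.

Lemma sig_mono a b : 0 <= a -> a <= b -> b <= rho ->
  b - a <= KS * (sig b - sig a) /\ sig b - sig a <= KS * (b - a).
Proof.
  intros H1 H2 H3. rewrite sig_diff by lra.
  pose proof (E_low a ltac:(lra)). pose proof (E_low b ltac:(lra)).
  pose proof (E_up a ltac:(lra)). pose proof (E_up b ltac:(lra)). pose proof mE_pos. pose proof ww_pos.
  set (Ea := (ww - 1) * a + rho) in *. set (Eb := (ww - 1) * b + rho) in *.
  assert (Hk : 0 < ww * rho * rho) by (apply Rmult_lt_0_compat; [apply Rmult_lt_0_compat|]; lra).
  assert (HP1 : mE * mE <= Ea * Eb) by (apply Rmult_le_compat; lra).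
  assert (HP2 : Ea * Eb <= ME * ME) by (apply Rmult_le_compat; lra).
  assert (HKa : ww*rho*rho/(mE*mE) <= KS) by (unfold KS; eapply Rle_trans; [apply Rmax_l| apply Rmax_r]).
  assert (HKb : ME*ME/(ww*rho*rho) <= KS) by (unfold KS; eapply Rle_trans; [apply Rmax_r| apply Rmax_r]).
  assert (Hm2 : 0 < mE * mE) by nra.
  split.
  - assert (b - a = (Ea*Eb/(ww*rho*rho)) * (ww * rho * rho * (b - a) / (Ea * Eb))) by (field; split; lra).
    rewrite H8 at 1. apply Rmult_le_compat_r.
    + apply Rmult_le_pos; [nra|]. left; apply Rinv_0_lt_compat; nra.
    + eapply Rle_trans; [|apply HKb]. unfold Rdiv. apply Rmult_le_compat_r; [left; apply Rinv_0_lt_compat; lra|lra].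
  - eapply Rle_trans. apply (quot_le _ _ _ (mE*mE)); nra.
    apply Rmult_le_compat_r; lra.
Qed.

Lemma phi_den t : 0 <= t <= rho -> ww * rho - (ww - 1) * t >= mE.
Proof.
  intros Ht. replace (ww * rho - (ww - 1) * t) with ((ww - 1) * (rho - t) + rho) by ring.
  apply E_low. lra.
Qed.

Lemma phi_range t : 0 <= t < rho -> 0 <= phi t < rho.
Proof.
  intros Ht. pose proof (phi_den t ltac:(lra)). pose proof mE_pos. pose proof ww_pos. unfold phi. split.
  - apply Rmult_le_pos; [nra|]. left; apply Rinv_0_lt_compat; lra.
  - apply (Rmult_lt_reg_r (ww * rho - (ww - 1) * t)); [lra|]. unfold Rdiv. rewrite Rmult_assoc, Rinv_l; [|lra]. assert (0 < rho * (ww * (rho - t))) by (apply Rmult_lt_0_compat; [lra|apply Rmult_lt_0_compat; lra]). nra.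
Qed.

Lemma sig_phi t : 0 <= t <= rho -> sig (phi t) = t.
Proof.
  intros Ht. pose proof (phi_den t Ht). pose proof mE_pos. pose proof ww_pos. unfold sig, phi.
  assert (HE : ww * rho - (ww - 1) * t <> 0) by lra.
  field. split; auto.
  replace ((ww - 1) * (rho * t) + rho * (ww * rho - (ww - 1) * t)) with (rho * (ww * rho)) by ring.
  assert (0 < rho * (ww * rho)) by (apply Rmult_lt_0_compat; [lra|apply Rmult_lt_0_compat; lra]). lra.
Qed.

Definition KF := delta*(gamma*rho+delta)/(mD*mD).
Lemma F0_lip a b : 0 <= a -> a <= b -> b <= rho -> 0 <= F0 a - F0 b <= KF * (b - a).
Proof.
  intros H1 H2 H3. rewrite F0_diff by lra.
  pose proof (den_pos a ltac:(lra)). pose proof (den_pos b ltac:(lra)). pose proof mD_pos. fold mD in *.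
  split.
  - apply Rmult_le_pos; [apply Rmult_le_pos; [apply Rmult_le_pos|]|]; try lra. left; apply Rinv_0_lt_compat; nra.
  - unfold KF. apply quot_le; try nra.
Qed.

Lemma ff_le x : x <= rho -> ff x = F0 x.
Proof. intros H. unfold ff, fmap. destruct (Rle_dec x rho); [reflexivity|lra]. Qed.
Lemma ff_gt x : rho < x -> ff x = (x - rho) / (1 - rho).
Proof. intros H. unfold ff, fmap. destruct (Rle_dec x rho); [lra|reflexivity]. Qed.

Lemma ff_range x : 0 <= x <= 1 -> 0 <= ff x <= 1.
Proof.
  intros Hx. destruct (Rle_dec x rho).
  - rewrite ff_le by lra. pose proof (F0_range x ltac:(lra)). lra.
  - rewrite ff_gt by lra. split.
    + apply Rmult_le_pos; [lra|]. left; apply Rinv_0_lt_compat; lra.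
    + apply (Rmult_le_reg_r (1 - rho)); [lra|]. unfold Rdiv. rewrite Rmult_assoc, Rinv_l; lra.
Qed.

Definition Kf := KF + / (1 - rho).
Lemma KF_pos : 0 <= KF.
Proof. unfold KF. pose proof mD_pos. apply Rmult_le_pos; [apply Rmult_le_pos; lra|]. left; apply Rinv_0_lt_compat; nra. Qed.

Lemma ff_lip a b : 0 <= a -> a <= b -> b <= 1 -> Rabs (ff b - ff a) <= Kf * (b - a).
Proof.
  intros H1 H2 H3. pose proof KF_pos. assert (Hq : 0 < / (1 - rho)) by (apply Rinv_0_lt_compat; lra).
  unfold Kf. destruct (Rle_dec b rho).
  - rewrite !ff_le by lra. pose proof (F0_lip a b H1 H2 r). rewrite Rabs_left1 by lra. nra.
  - destruct (Rle_dec a rho).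
    + rewrite (ff_le a) by lra. rewrite (ff_gt b) by lra.
      pose proof (F0_lip a rho H1 r ltac:(lra)). rewrite F0_rho in H0.
      assert (0 <= (b - rho)/(1 - rho)) by (apply Rmult_le_pos; lra).
      assert ((b - rho)/(1-rho) = /(1-rho) * (b - rho)) by (unfold Rdiv; ring).
      apply Rabs_le. split; nra.
    + rewrite !ff_gt by lra. replace ((b - rho) / (1 - rho) - (a - rho) / (1 - rho)) with (/(1-rho) * (b - a)) by (field; lra).
      rewrite Rabs_right by nra. nra.
Qed.

Definition tz (y : R) : Z := up (y / (2 * rho) - / 2).
Definition tri (y : R) : R := Rabs (y - 2 * rho * IZR (tz y)).

Lemma tri_base y : - rho <= y - 2 * rho * IZR (tz y) <= rho.
Proof.
  unfold tz. destruct (archimed (y / (2 * rho) - / 2)) as [A B].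
  set (z := IZR (up (y / (2 * rho) - / 2))) in *.
  set (t := y / (2*rho)) in *. assert (y = 2 * rho * t) by (unfold t; field; lra).
  rewrite H. split; nra.
Qed.

Lemma Zcases (j z : Z) : j = z \/ (IZR j <= IZR z - 1) \/ (IZR j >= IZR z + 1).
Proof.
  destruct (Z.eq_dec j z) as [->|Hn]; [left; auto|right].
  destruct (Z.lt_ge_cases j z).
  - left. rewrite <- minus_IZR. apply IZR_le. lia.
  - right. rewrite <- plus_IZR. apply Rle_ge, IZR_le. lia.
Qed.

Lemma tri_min y j : tri y <= Rabs (y - 2 * rho * IZR j).
Proof.
  pose proof (tri_base y). unfold tri. set (z := tz y) in *.
  destruct (Zcases j z) as [->|[Hj|Hj]]; [lra| |].
  - assert (y - 2*rho*IZR j >= rho) by nra. rewrite (Rabs_right (y - 2*rho*IZR j)) by lra.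
    apply Rabs_le. lra.
  - assert (y - 2*rho*IZR j <= - rho) by nra. rewrite (Rabs_left1 (y - 2*rho*IZR j)) by lra.
    apply Rabs_le. lra.
Qed.

Lemma tri_eq y j : Rabs (y - 2 * rho * IZR j) <= rho -> tri y = Rabs (y - 2 * rho * IZR j).
Proof.
  intros Hj0. apply Rle_antisym; [apply tri_min|].
  pose proof (tri_base y). unfold tri. set (z := tz y) in *.
  destruct (Zcases j z) as [->|[Hj|Hj]]; [lra| |].
  - assert (y - 2*rho*IZR j >= rho) by nra. rewrite (Rabs_right (y - 2*rho*IZR j)) in * by lra.
    assert (y - 2*rho*IZR z <= -rho) by nra. rewrite Rabs_left1; lra.
  - assert (y - 2*rho*IZR j <= - rho) by nra. rewrite (Rabs_left1 (y - 2*rho*IZR j)) in * by lra.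
    assert (y - 2*rho*IZR z >= rho) by nra. rewrite Rabs_right; lra.
Qed.

Lemma tri_range y : 0 <= tri y <= rho.
Proof. pose proof (tri_base y). unfold tri. split; [apply Rabs_pos|]. apply Rabs_le. lra. Qed.

Lemma tri_lip a b : Rabs (tri a - tri b) <= Rabs (a - b).
Proof.
  apply Rabs_le. split.
  - pose proof (tri_min b (tz a)). unfold tri at 1.
    pose proof (Rabs_triang (b - a) (a - 2 * rho * IZR (tz a))).
    replace (b - a + (a - 2 * rho * IZR (tz a))) with (b - 2 * rho * IZR (tz a)) in H0 by ring.
    rewrite (Rabs_minus_sym b a) in H0. lra.
  - pose proof (tri_min a (tz b)). unfold tri at 2.
    pose proof (Rabs_triang (a - b) (b - 2 * rho * IZR (tz b))).
    replace (a - b + (b - 2 * rho * IZR (tz b))) with (a - 2 * rho * IZR (tz b)) in H0 by ring.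
    lra.
Qed.

Lemma tri_shift y : tri (y + rho) = rho - tri y.
Proof.
  pose proof (tri_base y). set (z := tz y) in *. unfold tri at 2. fold z.
  destruct (Rle_dec 0 (y - 2 * rho * IZR z)).
  - rewrite (tri_eq _ (z + 1)); rewrite plus_IZR.
    + rewrite Rabs_left1 by lra. rewrite Rabs_right by lra. ring.
    + rewrite Rabs_left1 by lra. lra.
  - rewrite (tri_eq _ z).
    + rewrite Rabs_right by lra. rewrite Rabs_left1 by lra. ring.
    + rewrite Rabs_right by lra. lra.
Qed.

Lemma tri_id y : 0 <= y <= rho -> tri y = y.
Proof. intros H. rewrite (tri_eq y 0); simpl; rewrite Rmult_0_r, Rminus_0_r, Rabs_right; lra. Qed.

Lemma tri_neg y : - rho <= y <= 0 -> tri y = - y.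
Proof. intros H. rewrite (tri_eq y 0); simpl; rewrite Rmult_0_r, Rminus_0_r, Rabs_left1; lra. Qed.

Definition qq := 1 - rho.
Lemma qq_pos : 0 < qq < 1.
Proof. unfold qq; lra. Qed.

Lemma qpow_pos n : 0 < qq ^ n.
Proof. apply pow_lt. apply qq_pos. Qed.
Lemma qpow_S n : qq ^ S n = qq * qq ^ n.
Proof. reflexivity. Qed.
Lemma qpow_le1 n : qq ^ n <= 1.
Proof. induction n; simpl; [lra|]. pose proof qq_pos. pose proof (qpow_pos n). nra. Qed.
Lemma qpow_anti m n : (m <= n)%nat -> qq ^ n <= qq ^ m.
Proof.
  intros H. induction H; [lra|]. rewrite qpow_S. pose proof qq_pos. pose proof (qpow_pos m0). nra.
Qed.
Lemma qpow_Slt n : qq ^ S n < qq ^ n.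
Proof. rewrite qpow_S. pose proof qq_pos. pose proof (qpow_pos n). nra. Qed.

Lemma lay_ex w : 0 < w <= 1 -> exists m, qq ^ S m < w <= qq ^ m.
Proof.
  intros Hw. destruct (pow_lt_1_zero qq ltac:(rewrite Rabs_right; pose proof qq_pos; lra) w ltac:(lra)) as [N HN].
  specialize (HN N (le_n N)). rewrite Rabs_right in HN by (left; apply qpow_pos).
  clear - HN Hw. induction N as [|N IH].
  - simpl in HN. lra.
  - destruct (Rle_dec w (qq ^ N)).
    + exists N. split; auto.
    + apply IH. lra.
Qed.

Lemma lay_uniq w m n : qq ^ S m < w <= qq ^ m -> qq ^ S n < w <= qq ^ n -> m = n.
Proof.
  intros H1 H2. destruct (Nat.lt_trichotomy m n) as [Hl|[He|Hl]]; auto.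
  - pose proof (qpow_anti (S m) n Hl). lra.
  - pose proof (qpow_anti (S n) m Hl). lra.
Qed.

Definition lay (w : R) : nat := epsilon (inhabits O) (fun m => qq ^ S m < w <= qq ^ m).

Lemma lay_spec w : 0 < w <= 1 -> qq ^ S (lay w) < w <= qq ^ (lay w).
Proof.
  intros Hw. unfold lay. apply (epsilon_spec (inhabits O) (fun m => qq ^ S m < w <= qq ^ m)).
  apply lay_ex; auto.
Qed.

Lemma lay_eq w m : qq ^ S m < w <= qq ^ m -> lay w = m.
Proof.
  intros H. pose proof (qpow_pos (S m)). pose proof (qpow_le1 m).
  apply (lay_uniq w); auto. apply lay_spec. lra.
Qed.

Definition Sf (r : R) := 1 - sig (1 - r).
Definition Fq (w : R) := if Rle_dec w 0 then 0 else qq ^ (lay w) * Sf (w / qq ^ (lay w)).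

Lemma Sf_1 : Sf 1 = 1.
Proof. unfold Sf. rewrite Rminus_diag, sig_0. ring. Qed.
Lemma Sf_q : Sf qq = qq.
Proof. unfold Sf, qq. replace (1 - (1 - rho)) with rho by ring. rewrite sig_rho. ring. Qed.

Lemma Sf_mono a b : qq <= a -> a <= b -> b <= 1 ->
  b - a <= KS * (Sf b - Sf a) /\ Sf b - Sf a <= KS * (b - a).
Proof.
  intros H1 H2 H3. unfold Sf. unfold qq in H1.
  destruct (sig_mono (1 - b) (1 - a)) as [A B]; lra.
Qed.

Lemma Fq_layer w m : 0 < w -> qq ^ S m <= w <= qq ^ m -> Fq w = qq ^ m * Sf (w / qq ^ m).
Proof.
  intros Hw Hm. unfold Fq. destruct (Rle_dec w 0); [lra|].
  pose proof (qpow_pos m).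
  destruct (Req_dec w (qq ^ S m)) as [He|Hne].
  - rewrite (lay_eq w (S m)).
    + rewrite He. rewrite Rdiv_diag by (pose proof (qpow_pos (S m)); lra). rewrite Sf_1.
      rewrite qpow_S. replace (qq * qq ^ m / qq ^ m) with qq by (field; lra). rewrite Sf_q. ring.
    + split; [|lra]. rewrite He. apply qpow_Slt.
  - rewrite (lay_eq w m); auto. lra.
Qed.

Lemma Fq_pow m : Fq (qq ^ m) = qq ^ m.
Proof.
  pose proof (qpow_pos m). rewrite (Fq_layer _ m); auto.
  - rewrite Rdiv_diag by lra. rewrite Sf_1. ring.
  - pose proof (qpow_Slt m). lra.
Qed.

Lemma Fq_0 w : w <= 0 -> Fq w = 0.
Proof. intros H. unfold Fq. destruct (Rle_dec w 0); [auto|lra]. Qed.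

Lemma KS_pos : 0 < KS.
Proof. pose proof KS_ge1. lra. Qed.

Lemma Fq_layer_mono m a b : qq ^ S m <= a -> a <= b -> b <= qq ^ m ->
  b - a <= KS * (Fq b - Fq a) /\ Fq b - Fq a <= KS * (b - a).
Proof.
  intros H1 H2 H3. pose proof (qpow_pos m). pose proof (qpow_pos (S m)).
  rewrite (Fq_layer a m), (Fq_layer b m) by lra.
  rewrite qpow_S in *. pose proof qq_pos.
  destruct (Sf_mono (a / qq ^ m) (b / qq ^ m)) as [A B].
  - apply (Rmult_le_reg_r (qq ^ m)); auto. unfold Rdiv. rewrite Rmult_assoc, Rinv_l; lra.
  - unfold Rdiv. apply Rmult_le_compat_r; auto. left; apply Rinv_0_lt_compat; auto.
  - apply (Rmult_le_reg_r (qq ^ m)); auto. unfold Rdiv. rewrite Rmult_assoc, Rinv_l; lra.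
  - replace (b / qq ^ m - a / qq ^ m) with ((b - a) / qq ^ m) in * by (field; lra).
    pose proof KS_pos.
    split.
    + assert (b - a = qq ^ m * ((b - a)/qq^m)) by (field; lra). rewrite H6 at 1.
      replace (KS * (qq ^ m * Sf (b / qq ^ m) - qq ^ m * Sf (a / qq ^ m))) with (qq ^ m * (KS * (Sf (b / qq ^ m) - Sf (a / qq ^ m)))) by ring.
      apply Rmult_le_compat_l; lra.
    + replace (qq ^ m * Sf (b / qq ^ m) - qq ^ m * Sf (a / qq ^ m)) with (qq ^ m * (Sf (b / qq ^ m) - Sf (a / qq ^ m))) by ring.
      replace (KS * (b - a)) with (qq ^ m * (KS * ((b - a) / qq ^ m))) by (field; lra).
      apply Rmult_le_compat_l; lra.
Qed.

Lemma Fq_chain d : forall m a b, qq ^ S (m + d) <= a -> a <= b -> qq ^ S m <= b -> b <= qq ^ m ->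
  a <= qq ^ (m + d) ->
  b - a <= KS * (Fq b - Fq a) /\ Fq b - Fq a <= KS * (b - a).
Proof.
  induction d as [|d IH]; intros m a b H1 H2 H3 H4 H5.
  - rewrite Nat.add_0_r in *. apply (Fq_layer_mono m); auto.
  - set (c := qq ^ (m + S d)).
    assert (Hc1 : c = qq ^ S (m + d)) by (unfold c; f_equal; lia).
    assert (Hac : a <= c) by (unfold c; auto).
    assert (Hcb : c <= b).
    { rewrite Hc1. eapply Rle_trans; [|apply H3]. apply qpow_anti. lia. }
    destruct (IH m c b) as [A B]; auto.
    + rewrite Hc1. lra.
    + rewrite Hc1. apply Rlt_le, qpow_Slt.
    + destruct (Fq_layer_mono (m + S d) a c) as [C D]; auto.
      * unfold c; lra.
      * split; lra.
Qed.

Lemma lay_order a b : 0 < a -> a <= b -> b <= 1 -> (lay b <= lay a)%nat.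
Proof.
  intros H1 H2 H3. pose proof (lay_spec a ltac:(lra)). pose proof (lay_spec b ltac:(lra)).
  destruct (le_lt_dec (lay b) (lay a)); auto.
  pose proof (qpow_anti (S (lay a)) (lay b) l). lra.
Qed.

Lemma Fq_mono_pos a b : 0 < a -> a <= b -> b <= 1 ->
  b - a <= KS * (Fq b - Fq a) /\ Fq b - Fq a <= KS * (b - a).
Proof.
  intros H1 H2 H3. pose proof (lay_order a b H1 H2 H3).
  pose proof (lay_spec a ltac:(lra)). pose proof (lay_spec b ltac:(lra)).
  apply (Fq_chain (lay a - lay b) (lay b)); replace (lay b + (lay a - lay b))%nat with (lay a) by lia; lra.
Qed.

Lemma Fq_mono a b : 0 <= a -> a <= b -> b <= 1 ->
  b - a <= KS * (Fq b - Fq a) /\ Fq b - Fq a <= KS * (b - a).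
Proof.
  intros H1 H2 H3. destruct (Req_dec a 0) as [->|Ha0]; [|apply Fq_mono_pos; lra].
  rewrite (Fq_0 0) by lra. destruct (Req_dec b 0) as [->|Hb0].
  { rewrite Fq_0 by lra. lra. }
  pose proof (lay_spec b ltac:(lra)). set (m := lay b) in *.
  pose proof (qpow_pos (S m)). pose proof KS_ge1.
  destruct (Fq_layer_mono m (qq ^ S m) b) as [A B]; try lra.
  rewrite Fq_pow in *. split; nra.
Qed.

Lemma Fq_scale w : 0 <= w <= 1 -> Fq (qq * w) = qq * Fq w.
Proof.
  intros Hw. pose proof qq_pos. destruct (Req_dec w 0) as [->|Hw0].
  { rewrite Rmult_0_r, !Fq_0 by lra. ring. }
  pose proof (lay_spec w ltac:(lra)). set (m := lay w) in *.
  rewrite (Fq_layer w m) by lra.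
  rewrite (Fq_layer (qq * w) (S m)).
  - rewrite qpow_S. replace (qq * w / (qq * qq ^ m)) with (w / qq ^ m) by (pose proof (qpow_pos m); field; lra). ring.
  - nra.
  - rewrite !qpow_S in *. split; nra.
Qed.

Lemma Fq_range w : 0 <= w <= 1 -> 0 <= Fq w <= 1.
Proof.
  intros Hw. pose proof (Fq_mono 0 w ltac:(lra) ltac:(lra) ltac:(lra)) as [A B].
  pose proof (Fq_mono w 1 ltac:(lra) ltac:(lra) ltac:(lra)) as [C D].
  rewrite (Fq_0 0) in * by lra. assert (Fq 1 = 1) by (apply (Fq_pow 0)).
  pose proof KS_pos. split; nra.
Qed.

Lemma Fq_layer0 w : qq <= w <= 1 -> Fq w = Sf w.
Proof.
  intros Hw. pose proof qq_pos. rewrite (Fq_layer w 0) by (simpl; lra). simpl. replace (w / 1) with w by field. ring.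
Qed.

Definition Sinv (r : R) := 1 - phi (1 - r).
Definition Gq (w : R) := if Rle_dec w 0 then 0 else qq ^ (lay w) * Sinv (w / qq ^ (lay w)).

Lemma FG w : 0 <= w <= 1 -> Fq (Gq w) = w /\ 0 <= Gq w <= 1.
Proof.
  intros Hw. unfold Gq. destruct (Rle_dec w 0).
  { rewrite Fq_0 by lra. split; lra. }
  pose proof (lay_spec w ltac:(lra)). set (m := lay w) in *.
  pose proof (qpow_pos m). pose proof qq_pos.
  set (r := w / qq ^ m).
  assert (Hr1 : qq < r <= 1).
  { unfold r. rewrite qpow_S in H. split.
    - apply (Rmult_lt_reg_r (qq ^ m)); auto. unfold Rdiv. rewrite Rmult_assoc, Rinv_l; lra.
    - apply (Rmult_le_reg_r (qq ^ m)); auto. unfold Rdiv. rewrite Rmult_assoc, Rinv_l; lra. }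
  unfold qq in Hr1.
  pose proof (phi_range (1 - r) ltac:(lra)).
  assert (HS : Sf (Sinv r) = r).
  { unfold Sf, Sinv. replace (1 - (1 - phi (1 - r))) with (phi (1 - r)) by ring. rewrite sig_phi; lra. }
  unfold Sinv in *. fold qq in Hr1.
  assert (Hq : 1 - rho = qq) by reflexivity.
  split.
  - rewrite (Fq_layer _ m).
    + replace (qq ^ m * (1 - phi (1 - r)) / qq ^ m) with (1 - phi (1 - r)) by (field; lra).
      rewrite HS. unfold r. field. lra.
    + nra.
    + rewrite qpow_S. split; nra.
  - pose proof (qpow_le1 m). split; nra.
Qed.

Definition pi (y : R) := if Rle_dec y rho then sig (tri y) else 1 - Fq (1 - y).

Lemma pi_le y : y <= rho -> pi y = sig (tri y).
Proof. intros H. unfold pi. destruct (Rle_dec y rho); [auto|lra]. Qed.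

Lemma pi_alt y : 0 <= y <= 1 -> pi y = 1 - Fq (1 - y).
Proof.
  intros H. unfold pi. destruct (Rle_dec y rho); auto.
  rewrite tri_id by lra. rewrite Fq_layer0 by (unfold qq; lra). unfold Sf.
  replace (1 - (1 - y)) with y by ring. ring.
Qed.

Lemma pi_le_range y : y <= rho -> 0 <= pi y <= rho.
Proof. intros H. rewrite pi_le by auto. apply sig_range, tri_range. Qed.

Lemma pi_gt y : rho < y <= 1 -> rho < pi y <= 1.
Proof.
  intros H. rewrite pi_alt by lra. pose proof qq_pos.
  destruct (Fq_mono (1 - y) qq) as [A B]; try (unfold qq; lra).
  pose proof (Fq_pow 1). simpl in H1. rewrite Rmult_1_r in H1. rewrite H1 in *.
  pose proof (Fq_range (1 - y) ltac:(lra)). pose proof KS_pos.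
  assert (0 < qq - (1 - y)) by (unfold qq; lra).
  assert (Fq (1 - y) < qq) by nra. unfold qq in *. lra.
Qed.

Lemma pi_range y : y <= 1 -> 0 <= pi y <= 1.
Proof.
  intros H. destruct (Rle_dec y rho).
  - pose proof (pi_le_range y r). lra.
  - pose proof (pi_gt y ltac:(lra)). lra.
Qed.

Lemma pi_1 : pi 1 = 1.
Proof. rewrite pi_alt by lra. rewrite Rminus_diag, Fq_0 by lra. ring. Qed.

Lemma pi_rho : pi rho = rho.
Proof. rewrite pi_le, tri_id, sig_rho; lra. Qed.

Lemma sig_lip a b : 0 <= a <= rho -> 0 <= b <= rho -> Rabs (sig a - sig b) <= KS * Rabs (a - b).
Proof.
  intros H1 H2. destruct (Rle_dec a b).
  - destruct (sig_mono a b) as [A B]; try lra.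
    rewrite Rabs_left1 by (pose proof KS_pos; nra). rewrite (Rabs_left1 (a - b)) by lra. lra.
  - destruct (sig_mono b a) as [A B]; try lra.
    rewrite Rabs_right by (pose proof KS_pos; nra). rewrite (Rabs_right (a - b)) by lra. lra.
Qed.

Lemma sig_low a b : 0 <= a <= rho -> 0 <= b <= rho -> Rabs (a - b) <= KS * Rabs (sig a - sig b).
Proof.
  intros H1 H2. destruct (Rle_dec a b).
  - destruct (sig_mono a b) as [A B]; try lra.
    rewrite Rabs_left1 by (pose proof KS_pos; nra). rewrite (Rabs_left1 (sig a - sig b)) by (pose proof KS_pos; nra). lra.
  - destruct (sig_mono b a) as [A B]; try lra.
    rewrite Rabs_right by (pose proof KS_pos; nra). rewrite (Rabs_right (sig a - sig b)) by (pose proof KS_pos; nra). lra.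
Qed.

Lemma pi_lip_le a b : a <= rho -> b <= rho -> Rabs (pi a - pi b) <= KS * Rabs (a - b).
Proof.
  intros H1 H2. rewrite !pi_le by auto. eapply Rle_trans; [apply sig_lip; apply tri_range|].
  apply Rmult_le_compat_l; [pose proof KS_pos; lra|]. apply tri_lip.
Qed.

Lemma pi_lip_pos a b : 0 <= a <= 1 -> 0 <= b <= 1 -> Rabs (pi a - pi b) <= KS * Rabs (a - b)
  /\ Rabs (a - b) <= KS * Rabs (pi a - pi b).
Proof.
  intros H1 H2. rewrite !pi_alt by auto. destruct (Rle_dec a b).
  - destruct (Fq_mono (1 - b) (1 - a)) as [A B]; try lra.
    assert (Fq (1-b) <= Fq (1-a)) by (pose proof KS_pos; nra). rewrite !Rabs_left1 by lra. lra.
  - destruct (Fq_mono (1 - a) (1 - b)) as [A B]; try lra.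
    assert (Fq (1-a) <= Fq (1-b)) by (pose proof KS_pos; nra). rewrite !Rabs_right by lra. lra.
Qed.

Lemma pi_lip a b : a <= 1 -> b <= 1 -> Rabs (pi a - pi b) <= KS * Rabs (a - b).
Proof.
  intros H1 H2. pose proof KS_pos as HK.
  destruct (Rle_dec a rho), (Rle_dec b rho).
  - apply pi_lip_le; auto.
  - destruct (Rle_dec 0 a).
    + apply pi_lip_pos; lra.
    + pose proof (pi_lip_le a rho r ltac:(lra)) as E1. pose proof (proj1 (pi_lip_pos rho b ltac:(lra) ltac:(lra))) as E2.
      pose proof (Rabs_triang (pi a - pi rho) (pi rho - pi b)) as E3.
      replace (pi a - pi rho + (pi rho - pi b)) with (pi a - pi b) in E3 by ring.
      rewrite (Rabs_left1 (a - rho)) in E1 by lra. rewrite (Rabs_left1 (rho - b)) in E2 by lra.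
      rewrite (Rabs_left1 (a - b)) by lra. lra.
  - destruct (Rle_dec 0 b).
    + apply pi_lip_pos; lra.
    + pose proof (pi_lip_le rho b ltac:(lra) r) as E1. pose proof (proj1 (pi_lip_pos a rho ltac:(lra) ltac:(lra))) as E2.
      pose proof (Rabs_triang (pi a - pi rho) (pi rho - pi b)) as E3.
      replace (pi a - pi rho + (pi rho - pi b)) with (pi a - pi b) in E3 by ring.
      rewrite (Rabs_right (rho - b)) in E1 by lra. rewrite (Rabs_right (a - rho)) in E2 by lra.
      rewrite (Rabs_right (a - b)) by lra. lra.
  - apply pi_lip_pos; lra.
Qed.

Lemma pi_surj v : rho < v <= 1 -> exists a, rho < a <= 1 /\ pi a = v.
Proof.
  intros Hv. pose proof qq_pos. destruct (FG (1 - v)) as [A B]; [unfold qq in *; lra|].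
  exists (1 - Gq (1 - v)).
  assert (Gq (1 - v) < qq).
  { destruct (Rlt_dec (Gq (1 - v)) qq); auto.
    destruct (Fq_mono qq (Gq (1 - v))) as [C D]; try lra.
    pose proof (Fq_pow 1). simpl in H0. rewrite Rmult_1_r in H0. rewrite H0, A in *.
    pose proof KS_pos. assert (1 - v - qq >= 0) by nra. unfold qq in *. lra. }
  split; [unfold qq in *; lra|].
  rewrite pi_alt by lra. replace (1 - (1 - Gq (1 - v))) with (Gq (1 - v)) by ring. rewrite A. ring.
Qed.

Definition gi (y : R) := if Rle_dec y 0 then y + rho else rho + qq * y.
Definition gg (y : R) := if Rle_dec y rho then y - rho else (y - rho) / (1 - rho).
Definition gin (n : nat) (y : R) := Nat.iter n gi y.

Lemma gi_le1 y : y <= 1 -> gi y <= 1.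
Proof. intros H. pose proof qq_pos. unfold gi; destruct (Rle_dec y 0); unfold qq in *; nra. Qed.
Lemma gg_le1 y : y <= 1 -> gg y <= 1.
Proof.
  intros H. unfold gg; destruct (Rle_dec y rho); [lra|].
  apply (Rmult_le_reg_r (1 - rho)); [lra|]. unfold Rdiv. rewrite Rmult_assoc, Rinv_l; lra.
Qed.
Lemma gg_gi y : y <= 1 -> gg (gi y) = y.
Proof.
  intros H. pose proof qq_pos. unfold gi, gg, qq in *. destruct (Rle_dec y 0).
  - destruct (Rle_dec (y + rho) rho); [ring|lra].
  - destruct (Rle_dec (rho + (1 - rho) * y) rho); [nra|]. field. lra.
Qed.
Lemma gi_gg y : y <= 1 -> gi (gg y) = y.
Proof.
  intros H. pose proof qq_pos. unfold gi, gg, qq in *. destruct (Rle_dec y rho).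
  - destruct (Rle_dec (y - rho) 0); [ring|lra].
  - destruct (Rle_dec ((y - rho) / (1 - rho)) 0).
    + exfalso. assert (0 < (y - rho) / (1 - rho)) by (apply Rdiv_lt_0_compat; lra). lra.
    + field. lra.
Qed.
Lemma gi_mono a b : a <= b -> qq * (b - a) <= gi b - gi a <= b - a.
Proof.
  intros H. pose proof qq_pos. unfold gi. destruct (Rle_dec a 0), (Rle_dec b 0); unfold qq in *; split; nra.
Qed.
Lemma gi_lip a b : Rabs (gi a - gi b) <= Rabs (a - b) /\ qq * Rabs (a - b) <= Rabs (gi a - gi b).
Proof.
  pose proof qq_pos. destruct (Rle_dec a b).
  - destruct (gi_mono a b r). rewrite !Rabs_left1 by nra. split; nra.
  - destruct (gi_mono b a ltac:(lra)). rewrite !Rabs_right by nra. split; nra.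
Qed.

Lemma gin_S n y : gin (S n) y = gi (gin n y).
Proof. reflexivity. Qed.
Lemma gin_Sr n y : gin (S n) y = gin n (gi y).
Proof. unfold gin. rewrite Nat.iter_succ_r. reflexivity. Qed.
Lemma gin_le1 n y : y <= 1 -> gin n y <= 1.
Proof. intros H. induction n; simpl; auto. apply gi_le1. auto. Qed.
Lemma gin_lip n a b : Rabs (gin n a - gin n b) <= Rabs (a - b) /\ qq ^ n * Rabs (a - b) <= Rabs (gin n a - gin n b).
Proof.
  induction n; simpl.
  - split; lra.
  - destruct (gi_lip (gin n a) (gin n b)). pose proof qq_pos. destruct IHn. split; [lra|].
    rewrite Rmult_assoc. eapply Rle_trans; [|apply H0]. apply Rmult_le_compat_l; lra.
Qed.

Lemma f_pi y : y <= 1 -> ff (pi (gi y)) = pi y.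
Proof.
  intros H. unfold gi. destruct (Rle_dec y 0).
  - assert (Hl : y + rho <= rho) by lra. rewrite (pi_le _ Hl), tri_shift.
    pose proof (tri_range y). rewrite ff_le by (apply sig_range; lra).
    rewrite <- sig_conj by lra. replace (rho - (rho - tri y)) with (tri y) by ring.
    rewrite pi_le by lra. auto.
  - pose proof qq_pos. assert (Hin : rho < rho + qq * y <= 1) by (unfold qq in *; nra).
    pose proof (pi_gt _ Hin). rewrite ff_gt by lra.
    rewrite pi_alt by lra. rewrite (pi_alt y) by lra.
    replace (1 - (rho + qq * y)) with (qq * (1 - y)) by (unfold qq; ring).
    rewrite Fq_scale by lra. unfold qq in *. field. lra.
Qed.

Definition alt (n : nat) (s : R) := if Nat.even n then s else rho - s.
Lemma alt_S n s : alt (S n) s = rho - alt n s.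
Proof. unfold alt. rewrite Nat.even_succ, <- Nat.negb_even. destruct (Nat.even n); simpl; ring. Qed.
Lemma alt_range n s : 0 <= s <= rho -> 0 <= alt n s <= rho.
Proof. intros H. unfold alt. destruct (Nat.even n); lra. Qed.
Lemma alt_Srho n s : alt (S n) (rho - s) = alt n s.
Proof. rewrite alt_S. unfold alt. destruct (Nat.even n); ring. Qed.

Definition Pm (p : R + R) : nat -> R :=
  match p with
  | inl y => fun n => pi (gin n y)
  | inr s => fun n => sig (alt n s)
  end.

Definition XX := Xt rho gamma delta alpha.

Lemma P_in_X p : Yset rho p -> XX (Pm p).
Proof.
  intros Hp. unfold XX, Xt. change (fmap rho gamma delta alpha) with ff. intros n. destruct p as [y|s]; simpl in *.
  - split; [apply pi_range, gin_le1; auto|]. apply f_pi, gin_le1; auto.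
  - split; [pose proof (sig_range _ (alt_range n s Hp)); lra|].
    rewrite alt_S. pose proof (alt_range n s Hp).
    rewrite ff_le by (apply sig_range; lra).
    rewrite <- sig_conj by lra. f_equal. ring.
Qed.

Definition FT := ftilde rho gamma delta alpha.

Lemma gmap_inl y : gmap rho (inl y) = inl (gg y).
Proof. reflexivity. Qed.

Lemma P_conj p : Yset rho p -> Pm (gmap rho p) = FT (Pm p).
Proof.
  intros Hp. apply functional_extensionality. intros n. destruct p as [y|s]; simpl in Hp.
  - rewrite gmap_inl. destruct n; simpl Pm; unfold FT, ftilde; change (fmap rho gamma delta alpha) with ff.
    + simpl. rewrite <- (gi_gg y Hp) at 2. rewrite f_pi; auto. apply gg_le1; auto.
    + rewrite <- (gin_S n (gg y)), gin_Sr, gi_gg; auto.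
  - simpl. destruct n; unfold FT, ftilde; change (fmap rho gamma delta alpha) with ff.
    + unfold alt; simpl. rewrite ff_le by (apply sig_range; lra). rewrite sig_conj; auto.
    + rewrite alt_Srho. auto.
Qed.

Lemma gin_eventually y : y <= 1 -> exists j, rho < gin j y.
Proof.
  intros Hy. destruct (INR_unbounded (- y / rho)) as [n Hn].
  assert (Hn' : - INR n * rho < y).
  { apply (Rmult_lt_compat_r rho) in Hn; [|lra]. unfold Rdiv in Hn. rewrite Rmult_assoc, Rinv_l in Hn; lra. }
  clear Hn. revert y Hy Hn'. induction n as [|n IH]; intros y Hy Hn.
  - simpl in Hn. destruct (Rlt_dec rho y); [exists O; auto|].
    exists 1%nat. simpl. unfold gi. destruct (Rle_dec y 0); [lra|]. pose proof qq_pos. nra.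
  - destruct (Rle_dec y 0).
    + destruct (IH (gi y)) as [j Hj].
      * apply gi_le1; auto.
      * unfold gi. destruct (Rle_dec y 0); [|lra]. rewrite S_INR in Hn. lra.
      * exists (S j). rewrite gin_Sr. auto.
    + destruct (Rlt_dec rho y); [exists O; auto|].
      exists 1%nat. simpl. unfold gi. destruct (Rle_dec y 0); [lra|]. pose proof qq_pos. nra.
Qed.

Lemma ff_gt_inv t : 0 <= t <= 1 -> rho < ff t -> rho < t.
Proof.
  intros H1 H2. destruct (Rle_dec t rho); [|lra]. rewrite ff_le in H2 by auto.
  pose proof (F0_range t ltac:(lra)). lra.
Qed.

Lemma X_agree u x j : XX u -> XX x -> u j = x j -> rho < x j -> u = x.
Proof.
  intros Hu Hx He Hg'. unfold XX, Xt in *. change (fmap rho gamma delta alpha) with ff in *.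
  assert (A : forall i, u (j + i)%nat = x (j + i)%nat /\ rho < x (j + i)%nat).
  { induction i as [|i IH].
    - rewrite Nat.add_0_r. auto.
    - destruct IH as [E G]. replace (j + S i)%nat with (S (j + i)) by lia.
      destruct (Hu (j + i)%nat) as [Ru Fu]. destruct (Hx (j + i)%nat) as [Rx Fx].
      destruct (Hu (S (j + i))) as [Ru' _]. destruct (Hx (S (j + i))) as [Rx' _].
      assert (G1 : rho < x (S (j + i))) by (apply ff_gt_inv; auto; lra).
      assert (G2 : rho < u (S (j + i))) by (apply ff_gt_inv; auto; lra).
      rewrite ff_gt in Fu, Fx by auto. split; auto.
      assert ((u (S (j + i)) - rho) / (1 - rho) = (x (S (j + i)) - rho) / (1 - rho)) by lra.
      apply (f_equal (fun t => t * (1 - rho))) in H. field_simplify in H; lra. }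
  assert (B : forall d, (d <= j)%nat -> u (j - d)%nat = x (j - d)%nat).
  { induction d as [|d IH]; intros Hdj.
    - rewrite Nat.sub_0_r. auto.
    - specialize (IH ltac:(lia)). replace (j - d)%nat with (S (j - S d)) in IH by lia.
      destruct (Hu (j - S d)%nat) as [_ Fu]. destruct (Hx (j - S d)%nat) as [_ Fx].
      rewrite <- Fu, <- Fx, IH. auto. }
  apply functional_extensionality. intros n. destruct (le_lt_dec n j).
  - replace n with (j - (j - n))%nat by lia. apply B. lia.
  - replace n with (j + (n - j))%nat by lia. apply A.
Qed.

Definition ggn (n : nat) (y : R) := Nat.iter n gg y.
Lemma ggn_le1 n y : y <= 1 -> ggn n y <= 1.
Proof. intros H. induction n; simpl; auto. apply gg_le1; auto. Qed.
Lemma gin_ggn n y : y <= 1 -> gin n (ggn n y) = y.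
Proof.
  intros H. induction n; auto. change (ggn (S n) y) with (gg (ggn n y)).
  rewrite gin_Sr, gi_gg; auto. apply ggn_le1; auto.
Qed.

Lemma phi_range' t : 0 <= t <= rho -> 0 <= phi t <= rho.
Proof.
  intros Ht. destruct (Req_dec t rho) as [->|Hne].
  - unfold phi. replace (ww * rho - (ww - 1) * rho) with rho by ring. split; [|right; field; lra].
    unfold Rdiv. apply Rmult_le_pos; [nra|]. left; apply Rinv_0_lt_compat; lra.
  - pose proof (phi_range t ltac:(lra)). lra.
Qed.

Lemma P_surj x : XX x -> exists p, Yset rho p /\ Pm p = x.
Proof.
  intros Hx. destruct (classic (exists j, rho < x j)) as [[j Hj]|Hn].
  - pose proof Hx as Hx'. unfold XX, Xt in Hx'. destruct (Hx' j) as [Rj _].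
    destruct (pi_surj (x j) ltac:(lra)) as [a [Ha1 Ha2]].
    exists (inl (ggn j a)). split; [simpl; apply ggn_le1; lra|].
    apply (X_agree _ _ j); auto.
    + apply P_in_X. simpl. apply ggn_le1; lra.
    + simpl. rewrite gin_ggn by lra. auto.
  - assert (Hle : forall n, x n <= rho) by (intros n; destruct (Rle_dec (x n) rho); auto; exfalso; apply Hn; exists n; lra).
    pose proof Hx as Hx'. unfold XX, Xt in Hx'. change (fmap rho gamma delta alpha) with ff in Hx'.
    assert (H0r : 0 <= x O <= rho) by (pose proof (Hx' O); pose proof (Hle O); lra).
    exists (inr (phi (x O))). split; [simpl; apply phi_range'; auto|].
    pose proof (phi_range' _ H0r).
    apply functional_extensionality. intros n. simpl. induction n.
    + unfold alt; simpl. apply sig_phi; auto.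
    + rewrite alt_S. rewrite sig_conj by (apply alt_range; auto). rewrite IHn.
      destruct (Hx' n) as [Rn Fn]. destruct (Hx' (S n)) as [Rn' _]. pose proof (Hle (S n)).
      rewrite ff_le in Fn by auto. rewrite <- Fn. apply F0_invol. lra.
Qed.

Lemma P_inl_big y j : y <= 1 -> rho < gin j y -> rho < Pm (inl y) j.
Proof. intros H1 H2. simpl. apply pi_gt. split; auto. apply gin_le1; auto. Qed.

Lemma P_inr_le s n : 0 <= s <= rho -> Pm (inr s) n <= rho.
Proof. intros H. simpl. apply sig_range, alt_range; auto. Qed.

Lemma pi_big_inv z : z <= 1 -> rho < pi z -> rho < z.
Proof. intros H1 H2. destruct (Rle_dec z rho); [|lra]. pose proof (pi_le_range z r). lra. Qed.

Lemma P_inj p p' : Yset rho p -> Yset rho p' -> Pm p = Pm p' -> p = p'.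
Proof.
  intros H1 H2 He. destruct p as [y|s], p' as [y'|s']; simpl in H1, H2.
  - destruct (gin_eventually y H1) as [j Hj].
    pose proof (P_inl_big y j H1 Hj). rewrite He in H. simpl in H.
    apply pi_big_inv in H; [|apply gin_le1; auto].
    assert (E : pi (gin j y) = pi (gin j y')) by (change (Pm (inl y) j = Pm (inl y') j); rewrite He; auto).
    destruct (pi_lip_pos (gin j y) (gin j y')) as [_ L].
    + split; [lra|]. apply gin_le1; auto.
    + split; [lra|]. apply gin_le1; auto.
    + rewrite E, Rminus_diag, Rabs_R0, Rmult_0_r in L.
      destruct (gin_lip j y y') as [_ L2]. pose proof (qpow_pos j).
      pose proof (Rabs_pos (gin j y - gin j y')). pose proof (Rabs_pos (y - y')).
      assert (Rabs (y - y') = 0) by nra. f_equal.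
      destruct (Req_dec y y'); auto. exfalso. apply Rabs_no_R0 in H5; [auto|lra].
  - exfalso. destruct (gin_eventually y H1) as [j Hj].
    pose proof (P_inl_big y j H1 Hj). rewrite He in H. pose proof (P_inr_le s' j H2). lra.
  - exfalso. destruct (gin_eventually y' H2) as [j Hj].
    pose proof (P_inl_big y' j H2 Hj). rewrite <- He in H. pose proof (P_inr_le s j H1). lra.
  - assert (E : sig (alt 0 s) = sig (alt 0 s')) by (change (Pm (inr s) O = Pm (inr s') O); rewrite He; auto).
    unfold alt in E; simpl in E. pose proof (sig_low s s' H1 H2). rewrite E, Rminus_diag, Rabs_R0, Rmult_0_r in H.
    f_equal. destruct (Req_dec s s') as [|Hne]; auto. exfalso. pose proof (Rabs_pos (s - s')).
    assert (Hz : Rabs (s - s') = 0) by lra. revert Hz. apply Rabs_no_R0. lra.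
Qed.

Definition cn (n : nat) (s : R) := (-1) ^ n * s - 2 * INR (Nat.div2 n) * rho.

Lemma cn_even j s : cn (2 * j) s = s - 2 * INR j * rho.
Proof. unfold cn. rewrite pow_1_even, Nat.div2_double. ring. Qed.
Lemma cn_odd j s : cn (S (2 * j)) s = - s - 2 * INR j * rho.
Proof. unfold cn. rewrite pow_1_odd, Nat.div2_succ_double. ring. Qed.

Lemma cn_le n s : 0 <= s <= rho -> cn n s <= - (INR n - 1) * rho.
Proof.
  intros Hs. destruct (Nat.Even_or_Odd n) as [[j ->]|[j ->]].
  - rewrite cn_even, mult_INR. simpl. lra.
  - replace (2 * j + 1)%nat with (S (2 * j)) by lia. rewrite cn_odd, S_INR, mult_INR. simpl. lra.
Qed.

Lemma IZR_opp_nat j : IZR (- Z.of_nat j) = - INR j.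
Proof. rewrite opp_IZR, <- INR_IZR_INZ. auto. Qed.

Lemma tri_cn n s i : 0 <= s <= rho -> tri (cn n s + INR i * rho) = alt i s.
Proof.
  intros Hs. induction i as [|i IH].
  - simpl. unfold alt; simpl. rewrite Rmult_0_l, Rplus_0_r.
    destruct (Nat.Even_or_Odd n) as [[j ->]|[j ->]].
    + rewrite cn_even. rewrite (tri_eq _ (- Z.of_nat j)); rewrite IZR_opp_nat.
      * replace (s - 2 * INR j * rho - 2 * rho * - INR j) with s by ring. rewrite Rabs_right; lra.
      * replace (s - 2 * INR j * rho - 2 * rho * - INR j) with s by ring. rewrite Rabs_right; lra.
    + replace (2 * j + 1)%nat with (S (2 * j)) by lia. rewrite cn_odd.
      rewrite (tri_eq _ (- Z.of_nat j)); rewrite IZR_opp_nat.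
      * replace (- s - 2 * INR j * rho - 2 * rho * - INR j) with (- s) by ring. rewrite Rabs_left1; lra.
      * replace (- s - 2 * INR j * rho - 2 * rho * - INR j) with (- s) by ring. rewrite Rabs_left1; lra.
  - rewrite S_INR. replace (cn n s + (INR i + 1) * rho) with ((cn n s + INR i * rho) + rho) by ring.
    rewrite tri_shift, IH, alt_S. auto.
Qed.

Lemma gin_lin i y : y + INR i * rho <= rho -> gin i y = y + INR i * rho.
Proof.
  induction i as [|i IH]; intros H.
  - simpl. ring.
  - rewrite S_INR in H. rewrite gin_S, IH by lra. unfold gi. destruct (Rle_dec (y + INR i * rho) 0); [|lra].
    rewrite S_INR. ring.
Qed.

Lemma alt_diff n s s' : Rabs (alt n s' - alt n s) = Rabs (s' - s).
Proof. unfold alt. destruct (Nat.even n); auto. replace (rho - s' - (rho - s)) with (- (s' - s)) by ring. apply Rabs_Ropp. Qed.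

Lemma PC_inl y eps : y <= 1 -> eps > 0 -> exists e, e > 0 /\
  forall y', y' <= 1 -> Rabs (y' - y) < e -> forall n, Rabs (Pm (inl y') n - Pm (inl y) n) < eps.
Proof.
  intros Hy He. pose proof KS_pos. exists (eps / KS). split; [apply Rdiv_lt_0_compat; lra|].
  intros y' Hy' Hd' n. simpl.
  pose proof (pi_lip (gin n y') (gin n y) (gin_le1 n y' Hy') (gin_le1 n y Hy)).
  destruct (gin_lip n y' y) as [L _].
  assert (KS * Rabs (y' - y) < eps).
  { apply (Rmult_lt_compat_l KS) in Hd'; auto. unfold Rdiv in Hd'. rewrite <- Rmult_assoc, (Rmult_comm KS eps), Rmult_assoc, Rinv_r, Rmult_1_r in Hd'; lra. }
  nra.
Qed.

Lemma PC_inr s eps M : 0 <= s <= rho -> eps > 0 -> exists e, e > 0 /\ exists N : nat,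
  forall p, Ybasic rho s e N p -> forall n, (n <= M)%nat -> Rabs (Pm p n - Pm (inr s) n) < eps.
Proof.
  intros Hs He. pose proof KS_pos.
  assert (Hk : 0 < eps / KS) by (apply Rdiv_lt_0_compat; lra).
  exists (Rmin rho (eps / KS)). split; [unfold Rmin; destruct Rle_dec; lra|]. exists M.
  assert (Hm1 : Rmin rho (eps / KS) <= rho) by apply Rmin_l.
  assert (Hm2 : Rmin rho (eps / KS) <= eps / KS) by apply Rmin_r.
  assert (Key : forall d, d < Rmin rho (eps / KS) -> KS * d < eps).
  { intros d Hd'. assert (d < eps / KS) by lra. apply (Rmult_lt_compat_l KS) in H0; auto.
    unfold Rdiv in H0. rewrite <- Rmult_assoc, (Rmult_comm KS eps), Rmult_assoc, Rinv_r, Rmult_1_r in H0; lra. }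
  intros p Hp n Hn. destruct p as [y'|s']; simpl in Hp |- *.
  - destruct Hp as [Hy' [m [Hm Hc]]]. fold (cn m s) in Hc.
    pose proof (cn_le m s Hs).
    assert (Hnm : INR n + 1 <= INR m) by (rewrite <- S_INR; apply le_INR; lia).
    assert (Hlin : y' + INR n * rho <= rho).
    { apply Rabs_def2 in Hc. destruct Hc. nra. }
    rewrite gin_lin by auto. rewrite pi_le by lra.
    rewrite <- (tri_cn m s n Hs).
    eapply Rle_lt_trans; [apply sig_lip; apply tri_range|].
    eapply Rle_lt_trans; [apply Rmult_le_compat_l; [lra|apply tri_lip]|].
    replace (y' + INR n * rho - (cn m s + INR n * rho)) with (y' - cn m s) by ring.
    apply Key. auto.
  - destruct Hp as [Hs' Hd'].
    eapply Rle_lt_trans; [apply sig_lip; apply alt_range; auto|].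
    rewrite alt_diff. apply Key. auto.
Qed.

Lemma lt_div_mul d a K : 0 < K -> d < a / K -> K * d < a.
Proof. intros HK H. apply (Rmult_lt_compat_l K) in H; auto. replace (K * (a / K)) with a in H by (field; lra). auto. Qed.

Lemma HC_inl y e : y <= 1 -> e > 0 -> exists eta, eta > 0 /\ exists M : nat,
  forall p, Yset rho p -> (forall n, (n <= M)%nat -> Rabs (Pm p n - Pm (inl y) n) < eta) ->
  exists y', p = inl y' /\ Rabs (y' - y) < e.
Proof.
  intros Hy He. destruct (gin_eventually y Hy) as [j Hj].
  pose proof (gin_le1 j y Hy) as Hj1. pose proof (pi_gt _ (conj Hj Hj1)) as Hpv.
  pose proof KS_pos. pose proof (qpow_pos j).
  assert (Hk : 0 < e * qq ^ j / KS) by (apply Rdiv_lt_0_compat; nra).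
  exists (Rmin (pi (gin j y) - rho) (e * qq ^ j / KS)).
  split; [unfold Rmin; destruct Rle_dec; lra|]. exists j.
  assert (Hm1 : Rmin (pi (gin j y) - rho) (e * qq ^ j / KS) <= pi (gin j y) - rho) by apply Rmin_l.
  assert (Hm2 : Rmin (pi (gin j y) - rho) (e * qq ^ j / KS) <= e * qq ^ j / KS) by apply Rmin_r.
  intros p Hp Hc. specialize (Hc j (le_n j)). simpl in Hc.
  destruct p as [y'|s']; simpl in Hp, Hc.
  - exists y'. split; auto.
    apply Rabs_def2 in Hc as Hc'. destruct Hc' as [Hc1 Hc2].
    assert (Hbig : rho < gin j y') by (apply pi_big_inv; [apply gin_le1; auto| lra]).
    destruct (pi_lip_pos (gin j y') (gin j y)) as [_ L].
    + split; [lra|apply gin_le1; auto].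
    + split; [lra|auto].
    + destruct (gin_lip j y' y) as [_ L2].
      assert (KS * Rabs (pi (gin j y') - pi (gin j y)) < e * qq ^ j).
      { apply lt_div_mul; auto. lra. }
      assert (qq ^ j * Rabs (y' - y) < qq ^ j * e) by lra.
      apply Rmult_lt_reg_l in H2; auto.
  - exfalso. pose proof (sig_range _ (alt_range j s' Hp)). apply Rabs_def2 in Hc. lra.
Qed.

Lemma pi_big2 z : 1 - qq * qq < z <= 1 -> 1 - qq * qq < pi z.
Proof.
  intros Hz. pose proof qq_pos. assert (Hz2 : rho < z) by (unfold qq in *; nra).
  rewrite pi_alt by lra.
  destruct (Fq_mono (1 - z) (qq * qq)) as [A B]; try nra.
  pose proof (Fq_pow 2). simpl in H0. rewrite Rmult_1_r in H0. rewrite H0 in A.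
  pose proof KS_pos. assert (Fq (1 - z) < qq * qq) by nra. lra.
Qed.

Lemma HC_inr s e N : 0 <= s <= rho -> e > 0 -> exists eta, eta > 0 /\ exists M : nat,
  forall p, Yset rho p -> (forall n, (n <= M)%nat -> Rabs (Pm p n - Pm (inr s) n) < eta) ->
  Ybasic rho s e N p.
Proof.
  intros Hs He. pose proof KS_pos. pose proof qq_pos.
  assert (Hk : 0 < e / KS) by (apply Rdiv_lt_0_compat; lra).
  set (eta := Rmin (qq * rho) (e / KS)).
  assert (Hm1 : eta <= qq * rho) by apply Rmin_l.
  assert (Hm2 : eta <= e / KS) by apply Rmin_r.
  assert (Hpos : eta > 0) by (unfold eta, Rmin; destruct Rle_dec; nra).
  assert (Key : forall d, d < eta -> KS * d < e).
  { intros d Hd'. assert (d < e / KS) by lra. apply (Rmult_lt_compat_l KS) in H1; auto.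
    unfold Rdiv in H1. rewrite <- Rmult_assoc, (Rmult_comm KS e), Rmult_assoc, Rinv_r, Rmult_1_r in H1; lra. }
  exists eta. split; auto. exists (N + 3)%nat.
  intros p Hp Hc. destruct p as [y'|s']; simpl in Hp |- *.
  - split; auto.
    assert (C1 : forall i, (i <= N + 1)%nat -> gin i y' <= 0).
    { intros i Hi. destruct (Rle_dec (gin i y') 0) as [|Hn]; auto. exfalso.
      assert (E1 : gin (S i) y' = rho + qq * gin i y') by (rewrite gin_S; unfold gi; destruct (Rle_dec (gin i y') 0); [lra|auto]).
      assert (E2 : rho < gin (S i) y') by nra.
      assert (E3 : gin (S (S i)) y' = rho + qq * gin (S i) y') by (rewrite gin_S; unfold gi; destruct (Rle_dec (gin (S i) y') 0); [lra|auto]).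
      assert (E4 : 1 - qq * qq < gin (S (S i)) y') by (unfold qq in *; nra).
      pose proof (pi_big2 _ (conj E4 (gin_le1 _ _ Hp))).
      assert (Hc' := Hc (S (S i)) ltac:(lia)).
      change (Rabs (pi (gin (S (S i)) y') - sig (alt (S (S i)) s)) < eta) in Hc'.
      pose proof (sig_range _ (alt_range (S (S i)) s Hs)).
      assert (1 - qq*qq = rho + qq*rho) by (unfold qq; ring).
      apply Rabs_def2 in Hc'. lra. }
    assert (C2 : forall i, (i <= N + 1)%nat -> gin i y' = y' + INR i * rho).
    { induction i as [|i IH]; intros Hi.
      - simpl. ring.
      - rewrite gin_S, IH by lia. pose proof (C1 i ltac:(lia)). rewrite IH in H1 by lia.
        unfold gi. destruct (Rle_dec (y' + INR i * rho) 0); [|lra]. rewrite S_INR. ring. }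
    assert (Hy'N : y' + INR (N + 1) * rho <= 0) by (rewrite <- C2 by lia; apply C1; lia).
    rewrite plus_INR in Hy'N. simpl in Hy'N.
    specialize (Hc O ltac:(lia)). simpl in Hc. unfold alt in Hc; simpl in Hc.
    rewrite pi_le in Hc by (pose proof (pos_INR N); nra).
    assert (Htri : Rabs (tri y' - s) < e).
    { eapply Rle_lt_trans; [apply sig_low; auto; apply tri_range|]. apply Key. auto. }
    pose proof (tri_base y') as Hb. set (z := tz y') in *.
    assert (Ht : tri y' = Rabs (y' - 2 * rho * IZR z)) by reflexivity.
    pose proof (pos_INR N).
    destruct (Rle_dec 0 (y' - 2 * rho * IZR z)) as [Hd0|Hd0].
    + assert (Hz : IZR z < 0) by nra. apply lt_IZR in Hz.
      exists (2 * Z.to_nat (- z))%nat. split.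
      * apply INR_lt. rewrite mult_INR, (INR_IZR_INZ (Z.to_nat (- z))), Z2Nat.id by lia. rewrite opp_IZR. simpl. nra.
      * fold (cn (2 * Z.to_nat (- z)) s). rewrite cn_even, (INR_IZR_INZ (Z.to_nat (- z))), Z2Nat.id by lia. rewrite opp_IZR.
        rewrite Rabs_right in Ht by lra.
        replace (y' - (s - 2 * - IZR z * rho)) with (tri y' - s) by (rewrite Ht; ring). auto.
    + assert (Hz : IZR z <= 0) by nra. apply le_IZR in Hz.
      exists (S (2 * Z.to_nat (- z)))%nat. split.
      * apply INR_lt. rewrite S_INR, mult_INR, (INR_IZR_INZ (Z.to_nat (- z))), Z2Nat.id by lia. rewrite opp_IZR. simpl. nra.
      * fold (cn (S (2 * Z.to_nat (- z))) s). rewrite cn_odd, (INR_IZR_INZ (Z.to_nat (- z))), Z2Nat.id by lia. rewrite opp_IZR.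
        rewrite Rabs_left1 in Ht by lra.
        replace (y' - (- s - 2 * - IZR z * rho)) with (- (tri y' - s)) by (rewrite Ht; ring).
        rewrite Rabs_Ropp. auto.
  - specialize (Hc O ltac:(lia)). simpl in Hc. unfold alt in Hc; simpl in Hc.
    split; auto. eapply Rle_lt_trans; [apply sig_low; auto|]. apply Key. auto.
Qed.

Definition hh (x : nat -> R) : R + R := epsilon (inhabits (inl 0)) (fun p => Yset rho p /\ Pm p = x).

Lemma hh_spec x : XX x -> Yset rho (hh x) /\ Pm (hh x) = x.
Proof. intros Hx. unfold hh. apply (epsilon_spec (inhabits (inl 0)) (fun p => Yset rho p /\ Pm p = x)). apply P_surj; auto. Qed.

Lemma hh_P p : Yset rho p -> hh (Pm p) = p.
Proof.
  intros Hp. destruct (hh_spec (Pm p) (P_in_X p Hp)) as [A B]. apply P_inj; auto.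
Qed.

Lemma Ybasic_Yset s e N q : Ybasic rho s e N q -> Yset rho q.
Proof. destruct q; simpl; tauto. Qed.

Definition oX := openX XX.
Definition oY := openY rho.

Lemma hh_cont V : oY V -> oX (fun x => XX x /\ V (hh x)).
Proof.
  intros [HV1 HV2]. split; [tauto|]. intros x [Hx Vx].
  destruct (hh_spec x Hx) as [Yp Pp]. specialize (HV2 _ Vx). set (p := hh x) in *.
  destruct p as [y|s] eqn:Ep; simpl in Yp.
  - destruct HV2 as [e [He Hn]]. destruct (HC_inl y e Yp He) as [eta [Heta [M HM]]].
    exists eta. split; auto. exists M. intros z Hz Hbox. split; auto.
    destruct (hh_spec z Hz) as [Yz Pz].
    destruct (HM (hh z) Yz) as [y' [E1 E2]].
    + intros n Hn'. rewrite Pz, Pp. apply Hbox; auto.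
    + rewrite E1. rewrite E1 in Yz. simpl in Yz. apply Hn; auto.
  - destruct HV2 as [e [He [N Hn]]]. destruct (HC_inr s e N Yp He) as [eta [Heta [M HM]]].
    exists eta. split; auto. exists M. intros z Hz Hbox. split; auto.
    destruct (hh_spec z Hz) as [Yz Pz].
    apply Hn. apply HM; auto. intros n Hn'. rewrite Pz, Pp. apply Hbox; auto.
Qed.

Lemma hh_open U : oX U -> oY (fun y => exists x, U x /\ hh x = y).
Proof.
  intros [HU1 HU2]. split.
  - intros p [x [Ux <-]]. apply hh_spec. auto.
  - intros p [x [Ux Ex]]. pose proof (HU1 x Ux) as Hx. destruct (hh_spec x Hx) as [Yp Pp].
    rewrite Ex in Yp, Pp. destruct (HU2 x Ux) as [eps [Heps [N HN]]].
    destruct p as [y|s]; simpl in Yp.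
    + destruct (PC_inl y eps Yp Heps) as [e [He He2]]. exists e. split; auto.
      intros y' Hy' Hd'. exists (Pm (inl y')). split.
      * apply HN; [apply P_in_X; auto|]. intros n _. rewrite <- Pp. apply He2; auto.
      * apply hh_P. auto.
    + destruct (PC_inr s eps N Yp Heps) as [e [He [N' HN']]]. exists e. split; auto. exists N'.
      intros q Hq. exists (Pm q). split.
      * apply HN; [apply P_in_X; eapply Ybasic_Yset; eauto|]. intros n Hn. rewrite <- Pp. apply HN'; auto.
      * apply hh_P. eapply Ybasic_Yset; eauto.
Qed.

Lemma gmap_Yset p : Yset rho p -> Yset rho (gmap rho p).
Proof. destruct p as [y|s]; simpl; intros H. - apply (gg_le1 y H). - lra. Qed.

Lemma hh_conj x : XX x -> hh (FT x) = gmap rho (hh x).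
Proof.
  intros Hx. destruct (hh_spec x Hx) as [Yp Pp]. rewrite <- Pp at 1.
  rewrite <- P_conj by auto. apply hh_P. apply gmap_Yset; auto.
Qed.

Lemma P_inl_cv y : y <= 1 -> Xt1 (Pm (inl y)).
Proof.
  intros Hy. destruct (gin_eventually y Hy) as [j Hj].
  assert (Hk : forall k, 1 - gin (j + k) y = qq ^ k * (1 - gin j y)).
  { induction k as [|k IH].
    - rewrite Nat.add_0_r. simpl. ring.
    - replace (j + S k)%nat with (S (j + k)) by lia. rewrite gin_S.
      assert (0 < gin (j + k) y).
      { pose proof (qpow_pos k). pose proof (qpow_le1 k). pose proof (gin_le1 j y Hy). pose proof qq_pos.
        assert (qq ^ k * (1 - gin j y) <= 1 - gin j y) by nra. lra. }
      unfold gi. destruct (Rle_dec (gin (j + k) y) 0); [lra|]. rewrite qpow_S, Rmult_assoc, <- IH. unfold qq. ring. }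
  intros eps Heps. pose proof KS_pos. pose proof qq_pos.
  assert (Hj1 : 0 <= 1 - gin j y) by (pose proof (gin_le1 j y Hy); lra).
  destruct (pow_lt_1_zero qq ltac:(rewrite Rabs_right; lra) (eps / (KS * 2)) ltac:(apply Rdiv_lt_0_compat; lra)) as [N HN].
  exists (j + N)%nat. intros n Hn. unfold R_dist. simpl.
  replace n with (j + (n - j))%nat by lia.
  rewrite <- pi_1. eapply Rle_lt_trans; [apply pi_lip; [apply gin_le1|]; lra|].
  specialize (HN (n - j)%nat ltac:(lia)). rewrite Rabs_right in HN by (left; apply qpow_pos).
  rewrite Rabs_left1 by (pose proof (gin_le1 (j + (n - j)) y Hy); lra).
  replace (- (gin (j + (n - j)) y - 1)) with (1 - gin (j + (n - j)) y) by ring. rewrite Hk.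
  pose proof (gin_le1 j y Hy). pose proof (qpow_pos (n - j)).
  assert (qq ^ (n - j) * (1 - gin j y) <= 2 * qq ^ (n - j)) by nra.
  assert (KS * (2 * qq ^ (n - j)) < eps).
  { replace (KS * (2 * qq ^ (n - j))) with ((KS * 2) * qq ^ (n - j)) by ring. apply lt_div_mul; lra. }
  nra.
Qed.

Lemma P_inr_ncv s : 0 <= s <= rho -> ~ Xt1 (Pm (inr s)).
Proof.
  intros Hs Hc. destruct (Hc (1 - rho) ltac:(lra)) as [N HN]. specialize (HN N (le_n N)).
  unfold R_dist in HN. pose proof (P_inr_le s N Hs). rewrite Rabs_left1 in HN by lra. lra.
Qed.

Lemma FT_X x : XX x -> XX (FT x).
Proof.
  intros Hx. unfold XX, Xt in *. change (fmap rho gamma delta alpha) with ff in *. intros n.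
  unfold FT, ftilde. change (fmap rho gamma delta alpha) with ff in *. destruct n as [|n].
  - destruct (Hx O) as [R0 _]. split; [apply ff_range; auto|auto].
  - destruct (Hx n) as [Rn Fn]. split; auto.
Qed.

Definition shift (x : nat -> R) : nat -> R := fun n => x (S n).

Lemma shift_X x : XX x -> XX (shift x).
Proof. intros Hx. unfold XX, Xt, shift in *. intros n. apply Hx. Qed.

Lemma FT_shift x : XX x -> FT (shift x) = x.
Proof.
  intros Hx. apply functional_extensionality. intros [|n]; unfold FT, ftilde, shift; auto.
  apply Hx.
Qed.

Lemma FT_inj x y : FT x = FT y -> x = y.
Proof.
  intros H. apply functional_extensionality. intros n.
  change (x n) with (FT x (S n)). rewrite H. reflexivity.
Qed.

Definition Kf1 := Kf + 1.

Lemma FT_cont V : oX V -> oX (fun x => XX x /\ V (FT x)).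
Proof.
  intros [HV1 HV2]. split; [tauto|]. intros x [Hx Vx].
  destruct (HV2 _ Vx) as [eps [Heps [N HN]]].
  assert (HK : 0 < Kf1) by (unfold Kf1, Kf; pose proof KF_pos; assert (0 < / (1 - rho)) by (apply Rinv_0_lt_compat; lra); lra).
  exists (eps / Kf1). split; [apply Rdiv_lt_0_compat; lra|]. exists N.
  intros z Hz Hbox. split; auto. apply HN; [apply FT_X; auto|].
  intros n Hn. unfold FT, ftilde. change (fmap rho gamma delta alpha) with ff. destruct n as [|n].
  - specialize (Hbox O ltac:(lia)). unfold XX, Xt in Hz, Hx. destruct (Hz O) as [Rz _]. destruct (Hx O) as [Rx _].
    assert (Kf1 * Rabs (z O - x O) < eps) by (apply lt_div_mul; auto).
    pose proof (Rabs_pos (z O - x O)).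
    assert (Rabs (ff (z O) - ff (x O)) <= Kf * Rabs (z O - x O)).
    { destruct (Rle_dec (z O) (x O)).
      - rewrite Rabs_minus_sym, (Rabs_left1 (z O - x O)) by lra. eapply Rle_trans; [apply ff_lip; lra|]. right; ring.
      - rewrite (Rabs_right (z O - x O)) by lra. apply ff_lip; lra. }
    unfold Kf1 in *. assert (0 <= Kf) by (unfold Kf; pose proof KF_pos; assert (0 < / (1 - rho)) by (apply Rinv_0_lt_compat; lra); lra).
    nra.
  - assert (Hbn := Hbox n ltac:(lia)). assert (Kf1 * Rabs (z n - x n) < eps) by (apply lt_div_mul; auto).
    pose proof (Rabs_pos (z n - x n)). unfold Kf1 in *.
    assert (0 <= Kf) by (unfold Kf; pose proof KF_pos; assert (0 < / (1 - rho)) by (apply Rinv_0_lt_compat; lra); lra).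
    nra.
Qed.

Lemma FT_open U : oX U -> oX (fun y => exists x, U x /\ FT x = y).
Proof.
  intros [HU1 HU2]. split.
  - intros y [x [Ux <-]]. apply FT_X. auto.
  - intros y [x [Ux <-]]. destruct (HU2 x Ux) as [eps [Heps [N HN]]].
    exists eps. split; auto. exists (S N). intros z Hz Hbox.
    exists (shift z). split; [|apply FT_shift; auto].
    apply HN; [apply shift_X; auto|]. intros n Hn. unfold shift.
    specialize (Hbox (S n) ltac:(lia)). unfold FT, ftilde in Hbox. auto.
Qed.

Lemma openY_ext A B : (forall p, A p <-> B p) -> oY A -> oY B.
Proof.
  intros E [H1 H2]. split.
  - intros p Bp. apply H1, E, Bp.
  - intros p Bp. specialize (H2 p (proj2 (E p) Bp)). destruct p as [y|s].
    + destruct H2 as [e [He H]]. exists e. split; auto. intros y' H' H''. apply E. auto.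
    + destruct H2 as [e [He [N H]]]. exists e. split; auto. exists N. intros q Hq. apply E. auto.
Qed.

Lemma g_via p : Yset rho p -> gmap rho p = hh (FT (Pm p)).
Proof. intros Hp. rewrite <- P_conj by auto. rewrite hh_P; auto. apply gmap_Yset; auto. Qed.

Lemma g_homeo : homeo (Yset rho) oY (Yset rho) oY (gmap rho).
Proof.
  split; [|split; [|split; [|split]]].
  - apply gmap_Yset.
  - intros p p' Hp Hp' E. destruct p as [y|s], p' as [y'|s']; simpl in *; try discriminate.
    + change (inl (gg y) = inl (gg y') :> R + R) in E. injection E as E. rewrite <- (gi_gg y Hp), <- (gi_gg y' Hp'), E. auto.
    + injection E as E. f_equal. lra.
  - intros q Hq. destruct q as [y|s]; simpl in Hq.
    + exists (inl (gi y)). split; [simpl; apply gi_le1; auto|]. rewrite gmap_inl, gg_gi; auto.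
    + exists (inr (rho - s)). split; [simpl; lra|]. simpl. f_equal. ring.
  - intros V HV.
    pose proof (hh_cont V HV) as W1. pose proof (FT_cont _ W1) as W2. pose proof (hh_open _ W2) as W3.
    eapply openY_ext; [|apply W3]. intros p. split.
    + intros [x [[Hx [_ Vx]] <-]]. destruct (hh_spec x Hx) as [Yp Pp]. split; auto.
      rewrite g_via by auto. rewrite Pp. auto.
    + intros [Yp Vp]. exists (Pm p). split; [|apply hh_P; auto].
      split; [apply P_in_X; auto|]. split; [apply FT_X, P_in_X; auto|]. rewrite <- g_via; auto.
  - intros U HU.
    assert (HU' : oY U) by exact HU.
    pose proof (hh_cont U HU) as W1. pose proof (FT_open _ W1) as W2. pose proof (hh_open _ W2) as W3.
    eapply openY_ext; [|apply W3]. intros q. split.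
    + intros [x' [[x [[Hx Ux] <-]] <-]]. exists (hh x). split; auto.
      destruct (hh_spec x Hx) as [Yp Pp]. rewrite g_via by auto. rewrite Pp. auto.
    + intros [p [Up <-]]. pose proof (proj1 HU' p Up) as Yp.
      exists (FT (Pm p)). split; [|rewrite g_via; auto].
      exists (Pm p). split; auto. split; [apply P_in_X; auto|]. rewrite hh_P; auto.
Qed.

Lemma h_homeo : homeo XX oX (Yset rho) oY hh.
Proof.
  split; [|split; [|split; [|split]]].
  - intros x Hx. apply hh_spec; auto.
  - intros x y Hx Hy E. destruct (hh_spec x Hx) as [_ A]. destruct (hh_spec y Hy) as [_ B].
    rewrite <- A, <- B, E. auto.
  - intros q Hq. exists (Pm q). split; [apply P_in_X; auto|apply hh_P; auto].
  - apply hh_cont.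
  - apply hh_open.
Qed.

Lemma main_sec :
  homeo (Yset rho) (openY rho) (Yset rho) (openY rho) (gmap rho) /\
  (exists h : (nat -> R) -> R + R,
     homeo (Xt rho gamma delta alpha) (openX (Xt rho gamma delta alpha))
           (Yset rho) (openY rho) h /\
     (forall x, Xt rho gamma delta alpha x ->
        h (ftilde rho gamma delta alpha x) = gmap rho (h x)) /\
     (forall y, (Yset rho y /\ isinl y) <->
        exists x, Xt rho gamma delta alpha x /\ Xt1 x /\ h x = y) /\
     (forall y, (Yset rho y /\ ~ isinl y) <->
        exists x, Xt rho gamma delta alpha x /\ ~ Xt1 x /\ h x = y)) /\
  (forall x y, x < y -> y <= 1 -> exists a b,
     gmap rho (inl x) = inl a /\ gmap rho (inl y) = inl b /\ a < b) /\
  gmap rho (inl 1) = inl 1 /\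
  (forall x, 0 <= x <= rho -> gmap rho (gmap rho (inr x)) = inr x).
Proof.
  split; [apply g_homeo|]. split; [|split; [|split]].
  - exists hh. split; [apply h_homeo|]. split; [apply hh_conj|]. split.
    + intros y. split.
      * intros [Yy Iy]. exists (Pm y). split; [apply P_in_X; auto|]. split; [|apply hh_P; auto].
        destruct y as [y0|s]; [|contradiction]. apply P_inl_cv. auto.
      * intros [x [Hx [Cx <-]]]. destruct (hh_spec x Hx) as [Yp Pp]. split; auto.
        destruct (hh x) as [y0|s] eqn:E; simpl; auto. rewrite <- Pp in Cx. apply (P_inr_ncv s); auto.
    + intros y. split.
      * intros [Yy Iy]. exists (Pm y). split; [apply P_in_X; auto|]. split; [|apply hh_P; auto].
        destruct y as [y0|s]; [simpl in Iy; tauto|]. apply P_inr_ncv. auto.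
      * intros [x [Hx [Cx <-]]]. destruct (hh_spec x Hx) as [Yp Pp]. split; auto.
        destruct (hh x) as [y0|s] eqn:E; simpl; auto. intros _. apply Cx. rewrite <- Pp. apply P_inl_cv; auto.
  - intros x y Hxy Hy. exists (gg x), (gg y). split; [reflexivity|]. split; [reflexivity|].
    unfold gg. destruct (Rle_dec x rho), (Rle_dec y rho).
    + lra.
    + assert (0 < (y - rho) / (1 - rho)) by (apply Rdiv_lt_0_compat; lra). lra.
    + lra.
    + apply Rmult_lt_compat_r; [apply Rinv_0_lt_compat; lra|lra].
  - change (inl (gg 1) = inl 1 :> R + R). f_equal. unfold gg. destruct (Rle_dec 1 rho); [lra|]. field. lra.
  - intros x Hx. simpl. f_equal. ring.
Qed.
End Main.

Theorem theorem3 (rho delta gamma alpha : R)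
  (Hrho : 0 < rho < 1) (Hdelta : 0 < delta)
  (Hgamma : gamma > - delta / rho)
  (Halpha : - delta / rho < alpha < 0)
  (Hrho1 : rho = f0 rho gamma delta alpha 0) :
  homeo (Yset rho) (openY rho) (Yset rho) (openY rho) (gmap rho) /\
  (exists h : (nat -> R) -> R + R,
     homeo (Xt rho gamma delta alpha) (openX (Xt rho gamma delta alpha))
           (Yset rho) (openY rho) h /\
     (forall x, Xt rho gamma delta alpha x ->
        h (ftilde rho gamma delta alpha x) = gmap rho (h x)) /\
     (forall y, (Yset rho y /\ isinl y) <->
        exists x, Xt rho gamma delta alpha x /\ Xt1 x /\ h x = y) /\
     (forall y, (Yset rho y /\ ~ isinl y) <->
        exists x, Xt rho gamma delta alpha x /\ ~ Xt1 x /\ h x = y)) /\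
  (forall x y, x < y -> y <= 1 -> exists a b,
     gmap rho (inl x) = inl a /\ gmap rho (inl y) = inl b /\ a < b) /\
  gmap rho (inl 1) = inl 1 /\
  (forall x, 0 <= x <= rho -> gmap rho (gmap rho (inr x)) = inr x).
Proof.
  assert (Hg : gamma * rho + delta > 0).
  { apply (Rmult_lt_compat_r rho) in Hgamma; [|lra]. unfold Rdiv in Hgamma.
    rewrite Rmult_assoc, Rinv_l in Hgamma; lra. }
  assert (Ha : alpha = - delta).
  { unfold f0 in Hrho1. rewrite Rmult_0_r, Rmult_0_r, Rplus_0_l in Hrho1.
    apply (f_equal (fun t => t * delta)) in Hrho1. field_simplify in Hrho1; [|lra].
    apply (Rmult_eq_reg_r rho); lra. }
  apply main_sec; auto.
Qed.
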